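(* Let $\mathcal{R}$ be a non-closed linear manifold in a Hilbert space $\mathcal{H}$. Then the following are equivalent: (i) there exists an orthogonal projection $P$ in $\mathcal{H}$ such that $\operatorname{ran} P\cap\mathcal{R}=\{0\}$ and $\operatorname{ran}(I-P)\cap\mathcal{R}=\{0\}$; (ii) there exists a fundamental symmetry $J$ in $\mathcal{H}$ such that $J\mathcal{R}\cap\mathcal{R}=\{0\}$.
   Context: $\mathcal{H}$ is a complex, infinite-dimensional, separable Hilbert space. A linear manifold is a (not necessarily closed) linear subset. A fundamental symmetry is a bounded operator $J$ on $\mathcal{H}$ with $J=J^*=J^{-1}$ (equivalently $J=2P-I$ for an orthogonal projection $P$). *)

(* Defs.v *)
From Stdlib Require Import Reals.
Open Scope R_scope.

Record Cx := mkCx { cre : R; cim : R }.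
Definition C0 : Cx := mkCx 0 0.
Definition C1 : Cx := mkCx 1 0.
Definition Cadd (a b : Cx) : Cx := mkCx (cre a + cre b) (cim a + cim b).
Definition Cmul (a b : Cx) : Cx :=
  mkCx (cre a * cre b - cim a * cim b) (cre a * cim b + cim a * cre b).
Definition Cconj (a : Cx) : Cx := mkCx (cre a) (- cim a).

Record InnerProductSpace := {
  vec :> Type;
  vzero : vec;
  vadd : vec -> vec -> vec;
  vopp : vec -> vec;
  vscal : Cx -> vec -> vec;
  inner : vec -> vec -> Cx;
  vadd_assoc : forall x y z, vadd x (vadd y z) = vadd (vadd x y) z;
  vadd_comm : forall x y, vadd x y = vadd y x;
  vadd_0 : forall x, vadd x vzero = x;
  vadd_opp : forall x, vadd x (vopp x) = vzero;
  vscal_1 : forall x, vscal C1 x = x;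
  vscal_assoc : forall a b x, vscal a (vscal b x) = vscal (Cmul a b) x;
  vscal_distr_v : forall a x y, vscal a (vadd x y) = vadd (vscal a x) (vscal a y);
  vscal_distr_c : forall a b x, vscal (Cadd a b) x = vadd (vscal a x) (vscal b x);
  (* linear in the first argument, conjugate-linear in the second *)
  inner_add_l : forall x y z, inner (vadd x y) z = Cadd (inner x z) (inner y z);
  inner_scal_l : forall a x y, inner (vscal a x) y = Cmul a (inner x y);
  inner_conj_sym : forall x y, inner y x = Cconj (inner x y);
  inner_pos : forall x, 0 <= cre (inner x x);
  inner_def : forall x, inner x x = C0 -> x = vzero
}.

Arguments vzero {_}.
Arguments vadd {_} _ _.
Arguments vopp {_} _.
Arguments vscal {_} _ _.
Arguments inner {_} _ _.

Section IPS.
Context {V : InnerProductSpace}.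

Definition vsub (x y : V) : V := vadd x (vopp y).
Definition vnorm (x : V) : R := sqrt (cre (inner x x)).

Definition converges (u : nat -> V) (l : V) : Prop :=
  forall eps, 0 < eps -> exists N, forall n, (N <= n)%nat -> vnorm (vsub (u n) l) < eps.

Definition cauchy_seq (u : nat -> V) : Prop :=
  forall eps, 0 < eps -> exists N, forall m n, (N <= m)%nat -> (N <= n)%nat ->
    vnorm (vsub (u m) (u n)) < eps.

Fixpoint lin_comb (n : nat) (c : nat -> Cx) (v : nat -> V) : V :=
  match n with
  | O => vzero
  | S k => vadd (lin_comb k c v) (vscal (c k) (v k))
  end.

Definition lin_indep (n : nat) (v : nat -> V) : Prop :=
  forall c : nat -> Cx, lin_comb n c v = vzero -> forall i, (i < n)%nat -> c i = C0.
End IPS.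

Record HilbertSpace := {
  hs_ips :> InnerProductSpace;
  hs_complete : forall u : nat -> hs_ips, cauchy_seq u -> exists l, converges u l;
  hs_separable : exists d : nat -> hs_ips,
    forall x eps, 0 < eps -> exists n, vnorm (vsub x (d n)) < eps;
  hs_infinite_dim : forall n : nat, exists v : nat -> hs_ips, lin_indep n v
}.

Section Ops.
Context {V : InnerProductSpace}.

Definition is_linear (T : V -> V) : Prop :=
  (forall x y, T (vadd x y) = vadd (T x) (T y)) /\
  (forall a x, T (vscal a x) = vscal a (T x)).

Definition bounded_operator (T : V -> V) : Prop :=
  is_linear T /\ exists M : R, forall x, vnorm (T x) <= M * vnorm x.

Definition selfadjoint (T : V -> V) : Prop :=
  forall x y, inner (T x) y = inner x (T y).

Definition orth_projection (P : V -> V) : Prop :=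
  bounded_operator P /\ (forall x, P (P x) = P x) /\ selfadjoint P.

Definition fundamental_symmetry (J : V -> V) : Prop :=
  bounded_operator J /\ selfadjoint J /\ (forall x, J (J x) = x).

Definition linear_manifold (M : V -> Prop) : Prop :=
  M vzero /\ (forall x y, M x -> M y -> M (vadd x y)) /\
  (forall a x, M x -> M (vscal a x)).

Definition norm_closed (M : V -> Prop) : Prop :=
  forall (u : nat -> V) l, (forall n, M (u n)) -> converges u l -> M l.

Definition ran (T : V -> V) : V -> Prop := fun y => exists x, y = T x.

Definition img (T : V -> V) (M : V -> Prop) : V -> Prop :=
  fun y => exists x, M x /\ y = T x.

Definition trivial_inter (A B : V -> Prop) : Prop :=
  forall y, A y -> B y -> y = vzero.
End Ops.

(* Main.v *)
Require Import Defs.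
From Stdlib Require Import Reals Lra.
Open Scope R_scope.
Arguments vadd_assoc {_}.
Arguments vadd_comm {_}.
Arguments vadd_0 {_}.
Arguments vadd_opp {_}.
Arguments vscal_1 {_}.
Arguments vscal_assoc {_}.
Arguments vscal_distr_v {_}.
Arguments vscal_distr_c {_}.
Arguments inner_add_l {_}.
Arguments inner_scal_l {_}.
Arguments inner_conj_sym {_}.
Arguments inner_pos {_}.
Arguments inner_def {_}.

Lemma Cx_ext : forall a b, cre a = cre b -> cim a = cim b -> a = b.
Proof. intros [a1 a2] [b1 b2]; simpl; intros; subst; reflexivity. Qed.

Definition cm1 : Cx := mkCx (-1) 0.
Definition c2 : Cx := mkCx 2 0.
Definition ch : Cx := mkCx (1/2) 0.
Ltac cx := apply Cx_ext; unfold Cmul, Cadd, Cconj, Defs.C0, Defs.C1, cm1, c2, ch; simpl; field.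


Lemma vadd_0_l {V : InnerProductSpace} (x : V) : vadd vzero x = x.
Proof. rewrite vadd_comm; apply vadd_0. Qed.

Lemma vadd_swap4 {V : InnerProductSpace} (a b c d : V) :
  vadd (vadd a b) (vadd c d) = vadd (vadd a c) (vadd b d).
Proof.
  rewrite <- !vadd_assoc. f_equal.
  rewrite !vadd_assoc. f_equal. apply vadd_comm.
Qed.

Lemma vscal_0 {V : InnerProductSpace} (x : V) : vscal Defs.C0 x = vzero.
Proof.
  set (w := vscal Defs.C0 x).
  assert (Hw : w = vadd w w).
  { unfold w. rewrite <- vscal_distr_c. f_equal. cx. }
  rewrite <- (vadd_opp w). rewrite Hw at 2.
  rewrite <- vadd_assoc, vadd_opp, vadd_0. reflexivity.
Qed.

Lemma opp_unique {V : InnerProductSpace} (x y : V) : vadd y x = vzero -> y = vopp x.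
Proof.
  intro E. rewrite <- (vadd_0 y), <- (vadd_opp x), vadd_assoc, E, vadd_0_l. reflexivity.
Qed.

Lemma vopp_scal {V : InnerProductSpace} (x : V) : vopp x = vscal cm1 x.
Proof.
  symmetry. apply opp_unique.
  rewrite <- (vscal_1 x) at 2. rewrite <- vscal_distr_c.
  replace (Cadd cm1 Defs.C1) with Defs.C0 by cx. apply vscal_0.
Qed.

Lemma vscal_0v {V : InnerProductSpace} (a : Cx) : vscal a (@vzero V) = vzero.
Proof.
  rewrite <- (vscal_0 (@vzero V)), vscal_assoc.
  replace (Cmul a Defs.C0) with Defs.C0 by cx. reflexivity.
Qed.

Lemma vopp_opp {V : InnerProductSpace} (x : V) : vopp (vopp x) = x.
Proof.
  symmetry. apply opp_unique. apply vadd_opp.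
Qed.

Lemma vopp_0 {V : InnerProductSpace} : vopp (@vzero V) = vzero.
Proof. rewrite vopp_scal. apply vscal_0v. Qed.

Definition comb {V : InnerProductSpace} (x y : V) (a b : Cx) : V :=
  vadd (vscal a x) (vscal b y).

Lemma comb_add {V : InnerProductSpace} (x y : V) a b c d :
  vadd (comb x y a b) (comb x y c d) = comb x y (Cadd a c) (Cadd b d).
Proof. unfold comb. rewrite vadd_swap4, !vscal_distr_c. reflexivity. Qed.

Lemma comb_scal {V : InnerProductSpace} (x y : V) k a b :
  vscal k (comb x y a b) = comb x y (Cmul k a) (Cmul k b).
Proof. unfold comb. rewrite vscal_distr_v, !vscal_assoc. reflexivity. Qed.

Lemma comb_opp {V : InnerProductSpace} (x y : V) a b :
  vopp (comb x y a b) = comb x y (Cmul cm1 a) (Cmul cm1 b).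
Proof. rewrite vopp_scal. apply comb_scal. Qed.

Lemma comb_l {V : InnerProductSpace} (x y : V) : x = comb x y Defs.C1 Defs.C0.
Proof. unfold comb. rewrite vscal_1, vscal_0, vadd_0. reflexivity. Qed.

Lemma comb_r {V : InnerProductSpace} (x y : V) : y = comb x y Defs.C0 Defs.C1.
Proof. unfold comb. rewrite vscal_1, vscal_0, vadd_0_l. reflexivity. Qed.

Lemma comb_swap {V : InnerProductSpace} (x y : V) a b : comb y x a b = comb x y b a.
Proof. unfold comb. apply vadd_comm. Qed.

Lemma comb_same {V : InnerProductSpace} (x y : V) a b : comb y y a b = comb x y Defs.C0 (Cadd a b).
Proof. unfold comb. rewrite vscal_0, vadd_0_l, vscal_distr_c. reflexivity. Qed.

Lemma comb_lin {V : InnerProductSpace} (T : V -> V) x y a b :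
  is_linear T -> T (comb x y a b) = comb (T x) (T y) a b.
Proof. intros [Ha Hs]. unfold comb. rewrite Ha, !Hs. reflexivity. Qed.

Lemma lin_vopp {V : InnerProductSpace} (T : V -> V) x :
  is_linear T -> T (vopp x) = vopp (T x).
Proof. intros [Ha Hs]. rewrite !vopp_scal, Hs. reflexivity. Qed.

Lemma lin_0 {V : InnerProductSpace} (T : V -> V) :
  is_linear T -> T vzero = vzero.
Proof. intros [Ha Hs]. transitivity (T (vscal Defs.C0 vzero)). { f_equal; symmetry; apply vscal_0. } rewrite Hs; apply vscal_0. Qed.

Lemma inner_0_l {V : InnerProductSpace} (y : V) : inner vzero y = Defs.C0.
Proof. rewrite <- (vscal_0 (@vzero V)), inner_scal_l. cx. Qed.

Lemma inner_0_r {V : InnerProductSpace} (y : V) : inner y vzero = Defs.C0.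
Proof. rewrite inner_conj_sym, inner_0_l. cx. Qed.

Lemma inner_add_r {V : InnerProductSpace} (x y z : V) :
  inner x (vadd y z) = Cadd (inner x y) (inner x z).
Proof.
  rewrite inner_conj_sym, inner_add_l, (inner_conj_sym y x), (inner_conj_sym z x).
  destruct (inner x y), (inner x z). cx.
Qed.

Lemma comb_op_linear {V : InnerProductSpace} (S T : V -> V) a b :
  is_linear S -> is_linear T -> is_linear (fun x => comb (S x) (T x) a b).
Proof.
  intros [Sa Ss] [Ta Ts]. split.
  - intros x y. unfold comb. rewrite Sa, Ta, !vscal_distr_v. apply vadd_swap4.
  - intros c x. unfold comb. rewrite Ss, Ts, vscal_distr_v, !vscal_assoc.
    f_equal; f_equal; destruct a, b, c; cx.
Qed.

Lemma id_linear {V : InnerProductSpace} : is_linear (fun x : V => x).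
Proof. split; reflexivity. Qed.

Lemma comb_op_sa {V : InnerProductSpace} (T : V -> V) a b :
  cim a = 0 -> cim b = 0 -> selfadjoint T ->
  selfadjoint (fun x => comb x (T x) a b).
Proof.
  intros Ha Hb HT x y. unfold comb.
  rewrite inner_add_l, inner_add_r, !inner_scal_l, HT.
  rewrite (inner_conj_sym (vscal a y) x), (inner_conj_sym (vscal b (T y)) x),
    !inner_scal_l.
  rewrite (inner_conj_sym x y), (inner_conj_sym x (T y)).
  destruct a, b, (inner y x), (inner (T y) x); simpl in *; subst. cx.
Qed.

Lemma isometry {V : InnerProductSpace} (J : V -> V) :
  selfadjoint J -> (forall x, J (J x) = x) -> forall x, vnorm (J x) = vnorm x.
Proof. intros Hs Hi x. unfold vnorm. rewrite Hs, Hi. reflexivity. Qed.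

Lemma fs_bounded {V : InnerProductSpace} (J : V -> V) :
  is_linear J -> selfadjoint J -> (forall x, J (J x) = x) -> bounded_operator J.
Proof.
  intros Hl Hs Hi. split; [exact Hl|]. exists 1. intro x.
  rewrite (isometry J Hs Hi). lra.
Qed.

Lemma proj_bounded {V : InnerProductSpace} (P : V -> V) :
  is_linear P -> selfadjoint P -> (forall x, P (P x) = P x) -> bounded_operator P.
Proof.
  intros Hl Hs Hi. split; [exact Hl|]. exists 1. intro x.
  rewrite Rmult_1_l. unfold vnorm. apply sqrt_le_1_alt.
  set (p := P x). set (q := vadd x (vopp p)).
  assert (Ex : x = vadd p q).
  { unfold q. rewrite (vadd_comm x), vadd_assoc, vadd_opp, vadd_0_l. reflexivity. }
  assert (Pq : P q = vzero).
  { unfold q. destruct Hl as [Ha Hsc]. rewrite Ha, (lin_vopp P _ (conj Ha Hsc)).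
    unfold p. rewrite Hi. apply vadd_opp. }
  assert (Hpq : inner p q = Defs.C0).
  { unfold p at 1. rewrite Hs, Pq. apply inner_0_r. }
  assert (Hqp : inner q p = Defs.C0).
  { rewrite inner_conj_sym, Hpq. cx. }
  replace (inner x x) with (inner (vadd p q) (vadd p q)) by (rewrite <- Ex; reflexivity).
  rewrite inner_add_l, !inner_add_r, Hpq, Hqp. simpl.
  pose proof (inner_pos q). lra.
Qed.

Lemma comb_eq {V : InnerProductSpace} (x y : V) a b c d :
  a = c -> b = d -> comb x y a b = comb x y c d.
Proof. intros; subst; reflexivity. Qed.

Theorem proposition3p1 (H : HilbertSpace) (Rm : H -> Prop)
  (hR : linear_manifold Rm) (hnc : ~ norm_closed Rm) :
  (exists P : H -> H, orth_projection P /\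
     trivial_inter (ran P) Rm /\
     trivial_inter (ran (fun x => vsub x (P x))) Rm)
  <->
  (exists J : H -> H, fundamental_symmetry J /\ trivial_inter (img J Rm) Rm).
Proof.
  destruct hR as [R0 [Radd Rsc]].
  split.
  - intros [P [[[Pl _] [Pi Ps]] [T1 T2]]].
    set (J := fun x => comb x (P x) cm1 c2).
    assert (Jl : is_linear J) by (apply comb_op_linear; [apply id_linear | exact Pl]).
    assert (Js : selfadjoint J) by (apply comb_op_sa; [reflexivity|reflexivity|exact Ps]).
    assert (PJ : forall x, P (J x) = comb x (P x) Defs.C0 (Cadd cm1 c2)).
    { intro x. unfold J. rewrite comb_lin by exact Pl. rewrite Pi. apply comb_same. }
    assert (Ji : forall x, J (J x) = x).
    { intro x. change (comb (J x) (P (J x)) cm1 c2 = x). rewrite PJ.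
      unfold comb at 1. change (J x) with (comb x (P x) cm1 c2).
      rewrite !comb_scal, comb_add.
      transitivity (comb x (P x) Defs.C1 Defs.C0); [apply comb_eq; cx | symmetry; apply comb_l]. }
    exists J. split; [split; [apply fs_bounded; auto | split; auto]|].
    intros y [x [Rx E]] Ry. subst y.
    assert (E1 : vscal ch (vadd x (J x)) = P x).
    { change (J x) with (comb x (P x) cm1 c2).
      rewrite (comb_l x (P x)) at 1. rewrite comb_add, comb_scal.
      transitivity (comb x (P x) Defs.C0 Defs.C1); [apply comb_eq; unfold ch; cx | symmetry; apply comb_r]. }
    assert (E2 : vscal ch (vsub x (J x)) = vsub x (P x)).
    { unfold vsub. change (J x) with (comb x (P x) cm1 c2).
      rewrite comb_opp. rewrite (comb_l x (P x)) at 1. rewrite comb_add, comb_scal.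
      transitivity (comb x (P x) Defs.C1 cm1); [apply comb_eq; cx|].
      unfold comb. rewrite vscal_1, vopp_scal. reflexivity. }
    assert (Z1 : P x = vzero).
    { apply T1. exists x; reflexivity. rewrite <- E1. apply Rsc, Radd; auto. }
    assert (Z2 : vsub x (P x) = vzero).
    { apply T2. exists x; reflexivity. rewrite <- E2. apply Rsc, Radd; auto.
      rewrite vopp_scal. apply Rsc; auto. }
    assert (EJ : vadd (vscal cm1 (vsub x (P x))) (vscal Defs.C1 (P x)) = J x).
    { unfold vsub. rewrite vopp_scal, vscal_distr_v, !vscal_assoc.
      rewrite <- vadd_assoc, <- vscal_distr_c.
      change (J x) with (comb x (P x) cm1 c2). unfold comb. f_equal. f_equal. cx. }
    rewrite <- EJ, Z2, Z1, !vscal_0v. apply vadd_0.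
  - intros [J [[Jb [Js Ji]] T]].
    destruct Jb as [Jl _].
    set (P := fun x => comb x (J x) ch ch).
    assert (Pl : is_linear P) by (apply comb_op_linear; [apply id_linear | exact Jl]).
    assert (Ps : selfadjoint P) by (apply comb_op_sa; [reflexivity|reflexivity|exact Js]).
    assert (JC : forall x a b, J (comb x (J x) a b) = comb x (J x) b a).
    { intros x a b. rewrite comb_lin by exact Jl. rewrite Ji. apply comb_swap. }
    assert (Pi : forall x, P (P x) = P x).
    { intro x. change (comb (P x) (J (P x)) ch ch = P x). unfold comb at 1.
      change (P x) with (comb x (J x) ch ch). rewrite JC.
      rewrite !comb_scal, comb_add. apply comb_eq; unfold ch; cx. }
    exists P. split; [split; [apply proj_bounded; auto | split; auto]|split].
    + intros y [x E] Ry. subst y. apply T; auto.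
      exists (P x). split; auto. change (P x) with (comb x (J x) ch ch). rewrite JC. reflexivity.
    + intros y [x E] Ry. subst y.
      assert (EY : vsub x (P x) = comb x (J x) ch (Cmul cm1 ch)).
      { unfold vsub. change (P x) with (comb x (J x) ch ch). rewrite comb_opp.
        rewrite (comb_l x (J x)) at 1.
        rewrite comb_add. apply comb_eq; unfold ch, cm1; cx. }
      rewrite EY in Ry |- *.
      assert (Z : vopp (comb x (J x) ch (Cmul cm1 ch)) = vzero).
      { apply T.
        - exists (comb x (J x) ch (Cmul cm1 ch)). split; auto.
          rewrite JC, comb_opp. apply comb_eq; unfold ch, cm1; cx.
        - rewrite vopp_scal. apply Rsc; auto. }
      rewrite <- (vopp_opp (comb _ _ _ _)), Z. apply vopp_0.
Qed.
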